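(* Let $n$ be a positive integer, let $\lambda$ be a partition with at most $n$ nonzero parts, and let $\beta$ be a nonzero complex number. Then $$G_\lambda(\beta,\beta,\dots,\beta\mid -\beta^{-1})=\beta^{|\lambda|},$$ where all $n$ variables are specialized to $\beta$.
   Context: A partition $\lambda$ is identified with its Young diagram $\{(i,j)\in\mathbb{Z}_{>0}^2 : j\le\lambda_i\}$ and $|\lambda|=\sum_i\lambda_i$. A set-valued tableau of shape $\lambda$ with entries in $[n]=\{1,\dots,n\}$ assigns a non-empty subset $T_{i,j}\subseteq[n]$ to each box $(i,j)\in\lambda$ such that $\max T_{i,j}\le\min T_{i,j+1}$ whenever $(i,j),(i,j+1)\in\lambda$ and $\max T_{i,j}<\min T_{i+1,j}$ whenever $(i,j),(i+1,j)\in\lambda$; $\mathrm{SVT}(\lambda,n)$ is the set of these. For such $T$, $|T|=\sum_{(i,j)}|T_{i,j}|$, $\omega_k(T)$ is the number of boxes whose set contains $k$, and $x^{\omega(T)}=\prod_{k=1}^n x_k^{\omega_k(T)}$. The stable Grothendieck polynomial is $G_\lambda(x_1,\dots,x_n\mid\beta)=\sum_{T\in\mathrm{SVT}(\lambda,n)}\beta^{|T|-|\lambda|}x^{\omega(T)}$. *)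

(* Defs.v *)
From HB Require Import structures.
From mathcomp Require Import all_boot all_order all_algebra.
From mathcomp Require Import reals complex.
Set Implicit Arguments. Unset Strict Implicit. Unset Printing Implicit Defensive.
Import Order.TTheory GRing.Theory Num.Theory.
Local Open Scope ring_scope.

(* A partition is a nonincreasing sequence of naturals (trailing zeros
   allowed; they do not change the Young diagram).  Rows and columns are
   0-indexed here: box (i,j) belongs to the diagram iff i < size la and
   j < la_i.  Entries k : 'I_n stand for the integer k+1 of [n]. *)
Definition is_partition (la : seq nat) : bool := sorted geq la.

Definition nparts (la : seq nat) : nat := count (fun x => 0 < x)%N la.

Definition psize (la : seq nat) : nat := sumn la.

Definition nrows (la : seq nat) : nat := size la.
Definition ncols (la : seq nat) : nat := \max_(x <- la) x.

Definition box (la : seq nat) := ('I_(nrows la) * 'I_(ncols la))%type.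

Definition in_diagram (la : seq nat) (b : box la) : bool :=
  (b.2 < nth 0 la b.1)%N.

Definition filling (la : seq nat) (n : nat) := {ffun box la -> {set 'I_n}}.

(* T is a set-valued tableau of shape la with entries in [n]:
   boxes outside the diagram carry the empty set (so fillings are in
   bijection with set-valued tableaux), boxes inside carry nonempty sets,
   rows weakly increase (max T(i,j) <= min T(i,j+1)) and columns strictly
   increase (max T(i,j) < min T(i+1,j)). *)
Definition is_svt (la : seq nat) (n : nat) (T : filling la n) : bool :=
  [forall b : box la, (~~ in_diagram b) ==> (T b == set0)] &&
  [forall b : box la, in_diagram b ==> (T b != set0)] &&
  [forall b : box la, forall b' : box la,
     [&& in_diagram b, in_diagram b' & (b'.1 == b.1 :> nat) && (b'.2 == b.2.+1 :> nat)]
     ==> [forall a in T b, forall c in T b', (a <= c)%N]] &&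
  [forall b : box la, forall b' : box la,
     [&& in_diagram b, in_diagram b' & (b'.1 == b.1.+1 :> nat) && (b'.2 == b.2 :> nat)]
     ==> [forall a in T b, forall c in T b', (a < c)%N]].

Definition SVT (la : seq nat) (n : nat) : {set filling la n} :=
  [set T | is_svt T].

Definition svt_size (la : seq nat) (n : nat) (T : filling la n) : nat :=
  \sum_(b : box la) #|T b|.

Definition svt_weight (la : seq nat) (n : nat) (T : filling la n) (k : 'I_n) : nat :=
  #|[set b : box la | k \in T b]|.

Definition Groth (R : comRingType) (la : seq nat) (n : nat)
    (x : 'I_n -> R) (beta : R) : R :=
  \sum_(T in SVT la n)
     beta ^+ (svt_size T - psize la) * \prod_(k < n) x k ^+ svt_weight T k.

(* Main.v *)
Require Import Defs.
From HB Require Import structures.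
From mathcomp Require Import all_boot all_order all_algebra.
From mathcomp Require Import reals complex.
From mathcomp Require Import zify.
Import Order.TTheory GRing.Theory Num.Theory.
Set Implicit Arguments. Unset Strict Implicit. Unset Printing Implicit Defensive.

Section Inv.
Local Open Scope nat_scope.
Variables (n : nat) (la : seq nat).
Hypothesis Hp : is_partition la.
Hypothesis Hn : nparts la <= n.
Variable x0 : 'I_n.

Notation F := (filling la n).

Lemma nth_mono i j : i <= j -> j < size la -> nth 0 la j <= nth 0 la i.
Proof.
move=> ij js.
have := @sorted_leq_nth _ geq _ _ 0 la Hp i j.
rewrite !inE => H; apply: H => //.
- by move=> a b c' /= h1 h2; apply: leq_trans h2 h1.
- by move=> a /=.
- exact: leq_ltn_trans ij js.
Qed.

Lemma diag_lt_n (b : box la) : in_diagram b -> (b.1 : nat) < n.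
Proof.
rewrite /in_diagram => hb.
apply: leq_trans Hn.
have hs : (b.1).+1 <= size la by exact: ltn_ord.
move: hb hs; case: b => [[i hi0] [j hj0]] /= hb hs.
rewrite /nparts -(cat_take_drop i.+1 la) count_cat.
suff -> : count (fun x => 0 < x) (take i.+1 la) = i.+1 by apply: leq_addr.
transitivity (size (take i.+1 la)); last exact: size_takel.
apply/eqP; rewrite -all_count.
apply/(all_nthP 0) => k; rewrite size_takel // => hi.
rewrite nth_take //.
apply: leq_trans (leq_ltn_trans (leq0n _) hb) _.
by apply: nth_mono; rewrite // -ltnS.
Qed.

Definition key (b : box la) : 'I_n := insubd x0 (b.1 : nat).

Lemma key_val b : in_diagram b -> val (key b) = b.1.
Proof. by move=> hb; rewrite val_insubd diag_lt_n. Qed.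

Definition rank (b : box la) : nat := b.1 * ncols la + b.2.
Definition badset (T : F) : {set box la} :=
  [set b | in_diagram b && (T b != [set key b])].
Definition firstS (S : {set box la}) :=
  [pick b in S | [forall b', (b' \in S) ==> (rank b <= rank b')]].
Definition tog (A : {set 'I_n}) k := if k \in A then A :\ k else k |: A.
Definition flip (T : F) b : F :=
  [ffun b' => if b' == b then tog (T b) (key b) else T b'].
Definition phi (T : F) : F :=
  if T \in SVT la n then
    (if firstS (badset T) is Some b then flip T b else T) else T.
Definition T0 : F := [ffun b => if in_diagram b then [set key b] else set0].

Lemma svt_out (T : F) b : T \in SVT la n -> ~~ in_diagram b -> T b = set0.
Proof.
rewrite inE => /andP[/andP[/andP[/forallP H1 _] _] _] hb.
by apply/eqP; move/implyP: (H1 b); apply.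
Qed.
Lemma svt_in (T : F) b : T \in SVT la n -> in_diagram b -> T b != set0.
Proof.
rewrite inE => /andP[/andP[/andP[_ /forallP H1] _] _] hb.
by move/implyP: (H1 b); apply.
Qed.
Lemma svt_row (T : F) b b' a c : T \in SVT la n -> in_diagram b -> in_diagram b' ->
  b'.1 = b.1 :> nat -> b'.2 = (b.2).+1 :> nat -> a \in T b -> c \in T b' -> a <= c.
Proof.
rewrite inE => /andP[/andP[_ /forallP H] _] hb hb' e1 e2 ha hc.
move: (H b) => /forallP/(_ b')/implyP; rewrite hb hb' e1 e2 !eqxx => /(_ isT).
by move/forall_inP/(_ a ha)/forall_inP/(_ c hc).
Qed.
Lemma svt_col (T : F) b b' a c : T \in SVT la n -> in_diagram b -> in_diagram b' ->
  b'.1 = (b.1).+1 :> nat -> b'.2 = b.2 :> nat -> a \in T b -> c \in T b' -> a < c.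
Proof.
rewrite inE => /andP[_ /forallP H] hb hb' e1 e2 ha hc.
move: (H b) => /forallP/(_ b')/implyP; rewrite hb hb' e1 e2 !eqxx => /(_ isT).
by move/forall_inP/(_ a ha)/forall_inP/(_ c hc).
Qed.
Lemma svtI (T : F) :
  (forall b, ~~ in_diagram b -> T b = set0) ->
  (forall b, in_diagram b -> T b != set0) ->
  (forall b b' a c, in_diagram b -> in_diagram b' ->
     b'.1 = b.1 :> nat -> b'.2 = (b.2).+1 :> nat -> a \in T b -> c \in T b' -> a <= c) ->
  (forall b b' a c, in_diagram b -> in_diagram b' ->
     b'.1 = (b.1).+1 :> nat -> b'.2 = b.2 :> nat -> a \in T b -> c \in T b' -> a < c) ->
  T \in SVT la n.
Proof.
move=> H1 H2 H3 H4; rewrite inE /is_svt.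
apply/andP; split; [apply/andP; split; [apply/andP; split|]|].
- by apply/forallP => b; apply/implyP => hb; rewrite H1.
- by apply/forallP => b; apply/implyP => hb; rewrite H2.
- apply/forallP => b; apply/forallP => b'; apply/implyP => /and3P[hb hb' /andP[/eqP e1 /eqP e2]].
  by apply/forall_inP => a ha; apply/forall_inP => c hc; apply: (H3 b b').
- apply/forallP => b; apply/forallP => b'; apply/implyP => /and3P[hb hb' /andP[/eqP e1 /eqP e2]].
  by apply/forall_inP => a ha; apply/forall_inP => c hc; apply: (H4 b b').
Qed.

Lemma firstP (T : F) b : firstS (badset T) = Some b ->
  b \in badset T /\ (forall b', in_diagram b' -> rank b' < rank b -> T b' = [set key b']).
Proof.
rewrite /firstS; case: pickP => // b1 /andP[hb1 /forallP H] [<-]; split => // b' hd hr.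
apply/eqP; apply: contraTT hr; rewrite -leqNgt => hne.
by have /implyP := H b'; apply; rewrite inE hd hne.
Qed.

Lemma firstN (T : F) : firstS (badset T) = None -> badset T = set0.
Proof.
rewrite /firstS; case: pickP => // H _.
apply/eqP; apply/negPn/negP => /set0Pn[b0 hb0].
case: (arg_minnP rank hb0) => b hb hmin.
have /negP := H b; apply; apply/andP; split => //.
apply/forallP => b'; apply/implyP; exact: hmin.
Qed.

Lemma rank_row (b b' : box la) : b'.1 = b.1 :> nat -> b'.2 = (b.2).+1 :> nat -> rank b < rank b'.
Proof. by move=> e1 e2; rewrite /rank e1 e2 addnS. Qed.

Lemma rank_col (b b' : box la) : b'.1 = (b.1).+1 :> nat -> b'.2 = b.2 :> nat -> rank b < rank b'.
Proof.
move=> e1 e2; rewrite /rank e1 e2 mulSn; have := ltn_ord b.2; lia.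
Qed.

Lemma first_lb (T : F) b (a : 'I_n) : T \in SVT la n -> firstS (badset T) = Some b ->
  a \in T b -> (b.1 : nat) <= a.
Proof.
move=> hT hf ha; have [hb hmin] := firstP hf.
move: hb; rewrite inE => /andP[hd _].
case E: (b.1 : nat) => [|i] //.
have hi : i < nrows la by rewrite (leq_ltn_trans _ (ltn_ord b.1)) // E.
pose u : box la := (Ordinal hi, b.2).
have hu : in_diagram u.
  rewrite /in_diagram /=; apply: leq_trans hd (nth_mono _ _); rewrite ?E //.
  by rewrite -E; exact: ltn_ord.
have e1 : (b.1 : nat) = (u.1).+1 by rewrite E.
have Tu := hmin u hu (rank_col e1 erefl).
have hk : key u \in T u by rewrite Tu set11.
have := svt_col hT hu hd e1 erefl hk ha.
by rewrite key_val.
Qed.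

Lemma tog_mem (A : {set 'I_n}) k x : x \in tog A k -> (x \in A) || (x == k).
Proof.
rewrite /tog; case: ifP => _; rewrite !inE; first by case/andP => _ ->.
by rewrite orbC.
Qed.

Lemma tog_neq0 (A : {set 'I_n}) k : A != set0 -> A != [set k] -> tog A k != set0.
Proof.
rewrite /tog => h0 h1; case: ifP => hk.
- apply: contra h1 => /eqP h.
  apply/eqP/setP => x; rewrite inE; apply/idP/eqP => [hx|->//].
  by have := in_set0 x; rewrite -h !inE hx andbT => /negbFE/eqP.
- by apply/set0Pn; exists k; rewrite setU11.
Qed.

Lemma tog_neq1 (A : {set 'I_n}) k : A != set0 -> tog A k != [set k].
Proof.
rewrite /tog => h0; case: ifP => hk.
- by apply/eqP => h; have := set11 k; rewrite -h !inE eqxx.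
- apply/eqP => h; case/set0Pn: h0 => x hx.
  have : x \in k |: A by rewrite setU1r.
  by rewrite h inE => /eqP ex; rewrite -ex hx in hk.
Qed.

Lemma tog_tog (A : {set 'I_n}) k : tog (tog A k) k = A.
Proof.
rewrite {2}/tog; case: ifP => hk.
- by rewrite /tog setD11 setD1K.
- by rewrite /tog setU11 setU1K // hk.
Qed.

Lemma odd_tog (A : {set 'I_n}) k : odd #|tog A k| = ~~ odd #|A|.
Proof.
rewrite /tog; case: ifP => hk.
- by rewrite [in RHS](cardsD1 k A) hk add1n /= negbK.
- by rewrite cardsU1 hk.
Qed.

Lemma flip_svt (T : F) b : T \in SVT la n -> firstS (badset T) = Some b ->
  flip T b \in SVT la n.
Proof.
move=> hT hf; have [hb hmin] := firstP hf; move: (hb); rewrite inE => /andP[hd hne].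
have hlb := first_lb hT hf.
have hkv := key_val hd.
have hTb0 := svt_in hT hd.
apply: svtI.
- move=> b' hb'; rewrite ffunE; case: (eqVneq b' b) => [e|_]; first by rewrite e hd in hb'.
  exact: svt_out.
- move=> b' hb'; rewrite ffunE; case: (eqVneq b' b) => [_|_]; first exact: tog_neq0.
  exact: svt_in.
- move=> b1 b2 a c h1 h2 e1 e2; rewrite !ffunE.
  case: (eqVneq b1 b) => [eb1|nb1]; case: (eqVneq b2 b) => [eb2|nb2].
  + by move: e2; rewrite eb1 eb2; lia.
  + rewrite eb1 in h1 e1 e2 *.
    move=> /tog_mem /orP[ha|/eqP ->] hc; first exact: (svt_row hT h1 h2 e1 e2 ha hc).
    case/set0Pn: hTb0 => a0 ha0; rewrite hkv.
    exact: leq_trans (hlb _ ha0) (svt_row hT hd h2 e1 e2 ha0 hc).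
  + rewrite eb2 in h2 e1 e2 *.
    have Tb1 := hmin b1 h1 (rank_row e1 e2).
    move=> ha /tog_mem /orP[hc|/eqP ->]; first exact: (svt_row hT h1 h2 e1 e2 ha hc).
    by move: ha; rewrite Tb1 inE => /eqP ->; rewrite hkv key_val // e1.
  + exact: svt_row.
- move=> b1 b2 a c h1 h2 e1 e2; rewrite !ffunE.
  case: (eqVneq b1 b) => [eb1|nb1]; case: (eqVneq b2 b) => [eb2|nb2].
  + by move: e1; rewrite eb1 eb2; lia.
  + rewrite eb1 in h1 e1 e2 *.
    move=> /tog_mem /orP[ha|/eqP ->] hc; first exact: (svt_col hT h1 h2 e1 e2 ha hc).
    case/set0Pn: hTb0 => a0 ha0; rewrite hkv.
    exact: leq_ltn_trans (hlb _ ha0) (svt_col hT hd h2 e1 e2 ha0 hc).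
  + rewrite eb2 in h2 e1 e2 *.
    have Tb1 := hmin b1 h1 (rank_col e1 e2).
    move=> ha /tog_mem /orP[hc|/eqP ->]; first exact: (svt_col hT h1 h2 e1 e2 ha hc).
    by move: ha; rewrite Tb1 inE => /eqP ->; rewrite hkv key_val // e1.
  + exact: svt_col.
Qed.

Lemma flip_bad (T : F) b : T \in SVT la n -> b \in badset T ->
  badset (flip T b) = badset T.
Proof.
move=> hT hb; apply/setP => b'; rewrite !inE ffunE; case: (eqVneq b' b) => [->|_] //.
move: hb; rewrite inE => /andP[hd ->]; rewrite hd /= tog_neq1 //; exact: svt_in.
Qed.

Lemma phi_svt (T : F) : T \in SVT la n -> phi T \in SVT la n.
Proof.
rewrite /phi => hT; rewrite hT; case E: firstS => [b|] //; exact: flip_svt.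
Qed.

Lemma phi_inv (T : F) : phi (phi T) = T.
Proof.
case hT: (T \in SVT la n).
  2: have e : phi T = T by rewrite /phi hT.
  2: by rewrite !e.
case E: (firstS (badset T)) => [b|].
  2: have e : phi T = T by rewrite /phi hT E.
  2: by rewrite !e.
have [hb _] := firstP E.
have -> : phi T = flip T b by rewrite /phi hT E.
rewrite /phi (flip_svt hT E) flip_bad // E.
apply/ffunP => b'; rewrite !ffunE; case: (eqVneq b' b) => [->|] //.
by rewrite eqxx tog_tog.
Qed.

Lemma badset_T0 : badset T0 = set0.
Proof.
by apply/setP => b; rewrite !inE ffunE; case: ifP => //=; rewrite eqxx.
Qed.

Lemma T0_svt : T0 \in SVT la n.
Proof.
apply: svtI.
- by move=> b hb; rewrite ffunE (negbTE hb).
- by move=> b hb; rewrite ffunE hb; apply/set0Pn; exists (key b); rewrite set11.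
- move=> b b' a c hb hb' e1 e2; rewrite !ffunE hb hb' !inE => /eqP -> /eqP ->.
  by rewrite !key_val // e1.
- move=> b b' a c hb hb' e1 e2; rewrite !ffunE hb hb' !inE => /eqP -> /eqP ->.
  by rewrite !key_val // e1.
Qed.

Lemma firstN_T0 (T : F) : T \in SVT la n -> firstS (badset T) = None -> T = T0.
Proof.
move=> hT /firstN hB; apply/ffunP => b; rewrite ffunE; case: ifP => hd.
- have : b \notin badset T by rewrite hB in_set0.
  by rewrite inE hd /= negbK => /eqP.
- by apply: svt_out => //; rewrite hd.
Qed.

Lemma bad_neqT0 (T : F) b : b \in badset T -> T != T0.
Proof. by move=> hb; apply/eqP => e; move: hb; rewrite e badset_T0 in_set0. Qed.

Lemma phi_P (T : F) :
  ((phi T \in SVT la n) && (phi T != T0)) = ((T \in SVT la n) && (T != T0)).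
Proof.
case hT: (T \in SVT la n).
  2: have e : phi T = T by rewrite /phi hT.
  2: by rewrite e hT.
case E: (firstS (badset T)) => [b|].
  2: have e : phi T = T by rewrite /phi hT E.
  2: by rewrite e hT.
have -> : phi T = flip T b by rewrite /phi hT E.
have [hb _] := firstP E.
rewrite (flip_svt hT E) (bad_neqT0 hb) /=.
by apply: (@bad_neqT0 _ b); rewrite flip_bad.
Qed.

Lemma flip_odd (T : F) b : odd (svt_size (flip T b)) = ~~ odd (svt_size T).
Proof.
rewrite /svt_size (bigD1 b) //= [in RHS](bigD1 b) //= ffunE eqxx oddD odd_tog.
rewrite (eq_bigr (fun b' => #|T b'|)); last by move=> b' /negbTE nb; rewrite ffunE nb.
by rewrite oddD; case: odd; case: odd.
Qed.

Lemma sum_lt c m : \sum_(j < c) (j < m : nat) = minn m c.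
Proof.
elim: c => [|c IH]; first by rewrite big_ord0 minn0.
rewrite big_ord_recr /= IH; case: (ltnP c m) => h /=; lia.
Qed.

Lemma count_diag : \sum_(b : box la) (in_diagram b : nat) = psize la.
Proof.
rewrite -(pair_bigA _ (fun (i : 'I_(nrows la)) (j : 'I_(ncols la)) => (j < nth 0 la i) : nat)) /=.
transitivity (\sum_(i < nrows la) nth 0 la i).
  apply: eq_bigr => i _; rewrite sum_lt; apply/minn_idPl.
  by rewrite /ncols; apply: leq_bigmax_seq => //; apply: mem_nth.
by rewrite /psize sumnE (big_nth 0) big_mkord.
Qed.

Lemma size_ge (T : F) : T \in SVT la n -> psize la <= svt_size T.
Proof.
move=> hT; rewrite -count_diag /svt_size; apply: leq_sum => b _.
case hd: (in_diagram b) => //=; rewrite card_gt0; exact: svt_in.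
Qed.

Lemma T0_size : svt_size T0 = psize la.
Proof.
rewrite -count_diag /svt_size; apply: eq_bigr => b _; rewrite ffunE.
by case: ifP; rewrite ?cards1 ?cards0.
Qed.

Lemma signed_sum (R : numDomainType) :
  (\sum_(T in SVT la n) ((-1 : R) ^+ (svt_size T - psize la)) = 1)%R.
Proof.
rewrite (bigD1 T0) ?T0_svt //= T0_size subnn expr0.
set S := (\sum_(T in _ | _) _)%R.
suff h : S = (- S)%R.
  have : (S *+ 2 == 0)%R by rewrite mulr2n {1}h addNr.
  by rewrite mulrn_eq0 /= => /eqP ->; rewrite addr0.
rewrite {1}/S (reindex_inj (can_inj phi_inv)) /= /S -sumrN.
apply: eq_big => T; first by rewrite phi_P.
rewrite phi_P => /andP[hT hne].
case E: (firstS (badset T)) => [b|]; last by rewrite (firstN_T0 hT E) eqxx in hne.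
have hT' := phi_svt hT.
have hphi : phi T = flip T b by rewrite /phi hT E.
rewrite -signr_odd -[in RHS]signr_odd oddB ?size_ge // oddB ?size_ge //.
rewrite hphi flip_odd.
by case: odd; case: odd; rewrite /= ?expr0 ?expr1 ?opprK.
Qed.

Lemma sum_weight (T : F) : \sum_(k < n) svt_weight T k = svt_size T.
Proof.
rewrite /svt_weight /svt_size.
under eq_bigr do rewrite -sum1dep_card big_mkcond.
rewrite exchange_big; apply: eq_bigr => b _.
by rewrite -big_mkcond sum1_card.
Qed.

End Inv.

Unset Implicit Arguments.
Local Open Scope ring_scope.
Local Open Scope complex_scope.

Theorem theoremA1 (R : realType) (n : nat) (la : seq nat) (beta : R[i]) :
  (0 < n)%N -> is_partition la -> (nparts la <= n)%N -> beta != 0 ->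
  Groth la (fun _ : 'I_n => beta) (- beta^-1) = beta ^+ psize la.
Proof.
move=> n0 hp hn hb.
pose x0 : 'I_n := Ordinal n0.
rewrite /Groth.
transitivity (\sum_(T in SVT la n) (beta ^+ psize la * (-1) ^+ (svt_size T - psize la))).
  apply: eq_bigr => T hT.
  rewrite prodrXr (sum_weight T).
  have hge := size_ge hp hn hT.
  rewrite -{2}(subnK hge) exprD mulrA -exprMn mulNr mulVf // mulrC.
  reflexivity.
have hs := signed_sum hp hn x0 (R[i]).
transitivity (beta ^+ psize la * \sum_(T in SVT la n) (-1) ^+ (svt_size T - psize la)).
  rewrite mulr_sumr; reflexivity.
by rewrite hs mulr1.
Qed.
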